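(* Let $(X,\|\cdot\|)$ be a convex Banach space and let $\{v_n\}_{n\in\mathbb{N}}\subset X$ be a sequence such that $\|v_{n+m}\|\le\|v_n+v_m\|$ for all $n,m\in\mathbb{N}$ and $\lim_{n\to\infty}\frac{\|v_n\|}{n}>0$. Then the limit $\lim_{n\to\infty}\frac{v_n}{n}$ exists in $X$ if and only if $\left\{\frac{v_n}{\|v_n\|}\right\}_{n\in\mathbb{N}}$ is a uniformly convex subset of $X$.
   Context: $\mathbb{N}=\{1,2,3,\dots\}$. A Banach space $X$ is convex if for all $u,v\in X$ with $u\ne v$ and $\|u\|=\|v\|=1$ we have $\|u+v\|<2$. A subset $S\subset X$ is called uniformly convex if for every $\varepsilon>0$ there exists $\delta\in(0,1)$ such that for all $u,v\in S$ with $\|u\|=\|v\|=1$ and $\|u-v\|\ge\varepsilon$ we have $\|u+v\|\le 2-\delta$. (Under the hypotheses, the limit $\lim_{n\to\infty}\|v_n\|/n$ exists and equals $\inf_n \|v_n\|/n$ by the classical Fekete lemma, so all $v_n$ are non-zero.) *)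

(* Defs.v *)
From HB Require Import structures.
From mathcomp Require Import all_boot all_order all_algebra.
From mathcomp Require Import all_classical all_reals all_analysis.
Set Implicit Arguments. Unset Strict Implicit. Unset Printing Implicit Defensive.
Import Order.TTheory GRing.Theory Num.Theory.
Import numFieldNormedType.Exports.
Local Open Scope classical_set_scope.
Local Open Scope ring_scope.

(* Strictly convex ("convex" in the paper) normed space. *)
Definition strictly_convex_space (R : realType) (X : normedModType R) : Prop :=
  forall u v : X, u <> v -> `|u| = 1 -> `|v| = 1 -> `|u + v| < 2.

Definition uniformly_convex_set (R : realType) (X : normedModType R)
    (S : set X) : Prop :=
  forall eps : R, 0 < eps -> exists delta : R, 0 < delta < 1 /\
    forall u v : X, S u -> S v -> `|u| = 1 -> `|v| = 1 ->
      eps <= `|u - v| -> `|u + v| <= 2 - delta.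

(* Main.v *)
Require Import Defs.
From HB Require Import structures.
From mathcomp Require Import all_boot all_order all_algebra.
From mathcomp Require Import all_classical all_reals all_analysis.
From mathcomp Require Import ring lra.
Import Order.TTheory GRing.Theory Num.Theory.
Import numFieldNormedType.Exports.
Local Open Scope classical_set_scope.
Local Open Scope ring_scope.


Lemma subadd_mul (R : realType) (a : nat -> R) :
  (forall n m, (0 < n)%N -> (0 < m)%N -> a (n + m)%N <= a n + a m) ->
  forall k n, (0 < n)%N -> a (k.+1 * n)%N <= k.+1%:R * a n.
Proof.
move=> Hs; elim=> [|k IH] n n0; first by rewrite mul1n mul1r.
rewrite mulSn (le_trans (Hs _ _ n0 _)) ?muln_gt0 //.
by rewrite [k.+2%:R]mulrSr mulrDl mul1r addrC lerD2r IH.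
Qed.

Lemma fekete_lb (R : realType) (a : nat -> R) (L : R) :
  (forall n m, (0 < n)%N -> (0 < m)%N -> a (n + m)%N <= a n + a m) ->
  (fun n : nat => a n / n%:R) @ \oo --> L ->
  forall n, (0 < n)%N -> n%:R * L <= a n.
Proof.
move=> Hs Hc n n0; rewrite leNgt; apply/negP => H.
have n0R : 0 < n%:R :> R by rewrite ltr0n.
have eta0 : 0 < L - a n / n%:R.
  by rewrite subr_gt0 ltr_pdivrMr // mulrC.
have [N _ HN] := cvgr_dist_lt _ _ Hc _ eta0.
have HNp : (N <= N.+1 * n)%N by rewrite (leq_trans (leqnSn N)) // leq_pmulr.
have := HN _ HNp; rewrite /=.
have p0 : 0 < (N.+1 * n)%:R :> R by rewrite ltr0n muln_gt0.
have Hle : a (N.+1 * n)%N / (N.+1 * n)%:R <= a n / n%:R.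
  rewrite natrM invfM mulrA ler_pM2r ?invr_gt0 //.
  by rewrite ler_pdivrMr ?ltr0n // mulrC subadd_mul.
apply/negP; rewrite -leNgt (le_trans _ (ler_norm _)) //.
by rewrite lerD2l lerN2.
Qed.




Lemma descent (R : realType) (e : nat -> R) (c : R) (n m K : nat) :
  0 < c -> (forall k, 0 <= e k) -> (0 < n)%N -> (0 < m)%N ->
  exists k, [&& (K <= k)%N, e k - e (k + n)%N <= c * n%:R &
                e k - e (k + m)%N <= c * m%:R].
Proof.
move=> c0 e0 n0 m0; apply: contrapT => Hno.
have step : forall k, (K <= k)%N -> exists k', (K <= k')%N /\ e k' <= e k - c.
  move=> k Kk.
  have : ~~ [&& (K <= k)%N, e k - e (k + n)%N <= c * n%:R &
                e k - e (k + m)%N <= c * m%:R].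
    by apply/negP => H; apply: Hno; exists k.
  rewrite Kk /= negb_and -!ltNge => /orP[H|H].
  - exists (k + n)%N; split; first by rewrite (leq_trans Kk) ?leq_addr.
    rewrite lerBrDr addrC -lerBrDr ltW // (le_lt_trans _ H) //.
    by rewrite -{1}[c]mulr1 ler_pM2l // ler1n.
  - exists (k + m)%N; split; first by rewrite (leq_trans Kk) ?leq_addr.
    rewrite lerBrDr addrC -lerBrDr ltW // (le_lt_trans _ H) //.
    by rewrite -{1}[c]mulr1 ler_pM2l // ler1n.
have iter : forall j : nat, exists k, (K <= k)%N /\ e k <= e K - j%:R * c.
  elim=> [|j [k [Kk Hk]]]; first by exists K; rewrite mul0r subr0.
  have [k' [Kk' Hk']] := step k Kk.
  exists k'; split => //; rewrite (le_trans Hk') // mulrSr mulrDl mul1r opprD addrA.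
  by rewrite lerD2r.
pose j := (Num.truncn (e K / c)).+1.
have [k [_ Hk]] := iter j.
have : e K - j%:R * c < 0.
  rewrite subr_lt0 -ltr_pdivrMr //.
  by rewrite /j; apply: Num.Theory.truncnS_gt.
by move=> /(le_lt_trans Hk); rewrite ltNge e0.
Qed.

Section Back.
Variables (R : realType) (X : normedModType R) (v : nat -> X) (L : R).
Hypothesis L0 : 0 < L.
Hypothesis Hsub : forall n m, (0 < n)%N -> (0 < m)%N -> `|v (n + m)%N| <= `|v n + v m|.
Hypothesis Hlb : forall n, (0 < n)%N -> n%:R * L <= `|v n|.

Lemma a_gt0 n : (0 < n)%N -> 0 < `|v n|.
Proof. by move=> n0; rewrite (lt_le_trans _ (Hlb _ n0)) // mulr_gt0 ?ltr0n. Qed.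

Lemma v_eq n : (0 < n)%N -> v n = `|v n| *: (`|v n|^-1 *: v n).
Proof. by move=> n0; rewrite scalerA mulfV ?scale1r // gt_eqF ?a_gt0. Qed.

Lemma u_norm n : (0 < n)%N -> `| `|v n|^-1 *: v n| = 1.
Proof.
move=> n0; rewrite normrZ normfV normr_id mulVf // gt_eqF ?a_gt0 //.
Qed.

Lemma key (d eps : R) i j t :
  (forall i j, (0 < i)%N -> (0 < j)%N ->
     eps <= `| `|v i|^-1 *: v i - `|v j|^-1 *: v j| ->
     `| `|v i|^-1 *: v i + `|v j|^-1 *: v j| <= 2 - d) ->
  (0 < i)%N -> (0 < j)%N ->
  eps <= `| `|v i|^-1 *: v i - `|v j|^-1 *: v j| -> 0 <= d ->
  0 <= t -> t <= `|v i| -> t <= `|v j| ->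
  `|v (i + j)%N| <= `|v i| + `|v j| - d * t.
Proof.
move=> Hd.
wlog : i j / `|v i| <= `|v j|.
  move=> W i0 j0 He d0 t0 ti tj.
  have [h|h] := leP (`|v i|) (`|v j|); first exact: W.
  rewrite addnC [`|v i| + _]addrC; apply: W => //; first exact: ltW.
  by rewrite distrC.
move=> hij i0 j0 He d0 t0 ti tj.
set ui := `|v i|^-1 *: v i; set uj := `|v j|^-1 *: v j.
have e : v i + v j = `|v i| *: (ui + uj) + (`|v j| - `|v i|) *: uj.
  by rewrite scalerDr scalerBl /ui /uj -!v_eq // addrA [v i + _ + v j]addrAC addrK.
rewrite (le_trans (Hsub _ _ i0 j0)) // e (le_trans (ler_normD _ _)) //.
have nuj : `|uj| = 1 := u_norm _ j0.
rewrite (normrZ (`|v i|)) (normrZ (`|v j| - `|v i|)) nuj mulr1 [`| `|v j| - _|]ger0_norm ?subr_ge0 // ?normr_id.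
have := Hd _ _ i0 j0 He; rewrite -/ui -/uj => Hn.
rewrite (@le_trans _ _ (`|v i| * (2 - d) + (`|v j| - `|v i|))) //.
  by rewrite lerD2r ler_wpM2l.
have : d * t <= d * `|v i| by rewrite ler_wpM2l.
nra.
Qed.


Hypothesis Hlim : (fun n : nat => `|v n| / n%:R) @ \oo --> L.

Lemma u_cauchy :
  (forall eps, 0 < eps -> exists d, 0 < d /\ forall i j, (0 < i)%N -> (0 < j)%N ->
     eps <= `| `|v i|^-1 *: v i - `|v j|^-1 *: v j| ->
     `| `|v i|^-1 *: v i + `|v j|^-1 *: v j| <= 2 - d) ->
  forall eps, 0 < eps -> exists N, forall n m, (N <= n)%N -> (N <= m)%N ->
     `| `|v n|^-1 *: v n - `|v m|^-1 *: v m| < eps.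
Proof.
move=> UC eps e0.
have e20 : 0 < eps / 2 by rewrite divr_gt0.
have [d [d0 Hd]] := UC _ e20.
pose c := d * L / 2.
have c0 : 0 < c by rewrite /c divr_gt0 ?mulr_gt0.
have [N0 _ HN0] := cvgr_dist_lt _ _ Hlim _ c0.
exists N0.+1 => n m Nn Nm.
have n0 : (0 < n)%N by apply: leq_trans Nn.
have m0 : (0 < m)%N by apply: leq_trans Nm.
have enn : forall k, 0 <= `|v k| - k%:R * L.
  by case=> [|k]; rewrite subr_ge0 ?mul0r // Hlb.
have [k /and3P[Kk Hkn Hkm]] := @descent R (fun k => `|v k| - k%:R * L) c n m (maxn n m) c0 enn n0 m0.
have close : forall p, (0 < p)%N -> (N0 <= p)%N -> (p <= k)%N ->
    `|v k| - k%:R * L - (`|v (k + p)%N| - (k + p)%:R * L) <= c * p%:R ->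
    `| `|v p|^-1 *: v p - `|v k|^-1 *: v k| < eps / 2.
  move=> p p0 Np pk Hkp.
  have k0 : (0 < k)%N by apply: leq_trans pk.
  rewrite ltNge; apply/negP => He.
  have P0 : 0 < p%:R :> R by rewrite ltr0n.
  have t0 : 0 <= p%:R * L by rewrite mulr_ge0 // ltW.
  have tk : p%:R * L <= `|v k|.
    by rewrite (le_trans _ (Hlb _ k0)) // ler_pM2r // ler_nat.
  have Hk := @key d (eps / 2) p k (p%:R * L) Hd p0 k0 He (ltW d0) t0 (Hlb _ p0) tk.
  have Hp : `|v p| < p%:R * L + c * p%:R.
    have := HN0 _ Np; rewrite /= distrC => /(le_lt_trans (ler_norm _)).
    rewrite ltrBlDr ltr_pdivrMr // => H.
    by move: H; rewrite mulrDl addrC [L * _]mulrC.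
  have E : d * (p%:R * L) = 2 * (c * p%:R).
    by rewrite /c; field.
  move: Hkp Hk Hp E; rewrite addnC natrD mulrDl => Hkp Hk Hp E.
  have cp0 : 0 < c * p%:R by rewrite mulr_gt0.
  lra.
have nk : (n <= k)%N by apply: leq_trans Kk; rewrite leq_maxl.
have mk : (m <= k)%N by apply: leq_trans Kk; rewrite leq_maxr.
have h1 := close n n0 (ltnW Nn) nk Hkn.
have h2 := close m m0 (ltnW Nm) mk Hkm.
rewrite (le_lt_trans (ler_distD (`|v k|^-1 *: v k) _ _)) //.
by rewrite [X in _ + X]distrC (splitr eps) ltrD.
Qed.

End Back.


Lemma cauchy_seq_cvg (R : realType) (X : completeNormedModType R) (u : nat -> X) :
  (forall eps, 0 < eps -> exists N, forall n m, (N <= n)%N -> (N <= m)%N -> `|u n - u m| < eps) ->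
  cvg (u @ \oo).
Proof.
move=> H; apply: cauchy_cvg; apply: cauchy_exP => eps e0.
have [N HN] := H _ e0.
exists (u N); exists N => // n /= Nn.
by rewrite -ball_normE /ball_ /= HN.
Qed.

Lemma back_cvg (R : realType) (X : normedModType R) (v : nat -> X) (L : R) (e : X) :
  (fun n : nat => `|v n| / n%:R) @ \oo --> L ->
  (fun n => `|v n|^-1 *: v n) @ \oo --> e ->
  (forall n, (0 < n)%N -> 0 < `|v n|) ->
  cvg ((fun n : nat => (n%:R)^-1 *: v n) @ \oo).
Proof.
move=> HL Hu Hp.
have H : (fun n => (`|v n| / n%:R) *: (`|v n|^-1 *: v n)) @ \oo --> L *: e by apply: cvgZ.
apply/cvg_ex; exists (L *: e); apply: cvg_trans H.
apply: near_eq_cvg; exists 1%N => // n /= n1.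
rewrite scalerA mulrAC mulfV ?mul1r //.
by rewrite gt_eqF ?Hp.
Qed.


Lemma fin_min1 (R : realType) (f : nat -> R) N :
  (forall i, (i < N)%N -> 0 < f i) -> exists d, 0 < d /\ forall i, (i < N)%N -> d <= f i.
Proof.
elim: N => [|N IH] H; first by exists 1; split => // i.
have [d [d0 Hd]] := IH (fun i iN => H i (ltnW iN)).
exists (Num.min d (f N)); split; first by rewrite lt_min d0 H.
move=> i; rewrite ltnS leq_eqVlt => /orP[/eqP->|iN]; first by rewrite ge_min lexx orbT.
by rewrite ge_min Hd.
Qed.

Lemma fin_min2 (R : realType) (f : nat -> nat -> R) N :
  (forall i j, (i < N)%N -> (j < N)%N -> 0 < f i j) ->
  exists d, 0 < d /\ forall i j, (i < N)%N -> (j < N)%N -> d <= f i j.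
Proof.
elim: N => [|N IH] H; first by exists 1; split => // i.
have [d [d0 Hd]] := IH (fun i j iN jN => H i j (ltnW iN) (ltnW jN)).
have [d1 [d10 Hd1]] := @fin_min1 R (f N) N.+1 (fun j jN => H N j (ltnSn N) jN).
have [d2 [d20 Hd2]] := @fin_min1 R (fun i => f i N) N.+1 (fun i iN => H i N iN (ltnSn N)).
exists (Num.min d (Num.min d1 d2)); split; first by rewrite !lt_min d0 d10 d20.
move=> i j; rewrite ltnS leq_eqVlt => /orP[/eqP->|iN];
  rewrite ltnS leq_eqVlt => /orP[/eqP->|jN].
- by rewrite !ge_min Hd1 ?orbT.
- by rewrite !ge_min Hd1 ?orbT // ltnS ltnW.
- by rewrite !ge_min Hd2 ?orbT // ltnS ltnW.
- by rewrite ge_min Hd.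
Qed.


Lemma fwd (R : realType) (X : normedModType R) (u : nat -> X) (e : X) :
  strictly_convex_space X -> (forall n, (0 < n)%N -> `|u n| = 1) -> `|e| = 1 ->
  u @ \oo --> e ->
  forall eps, 0 < eps -> exists delta, 0 < delta < 1 /\
    forall i j, (0 < i)%N -> (0 < j)%N -> eps <= `|u i - u j| -> `|u i + u j| <= 2 - delta.
Proof.
move=> SC Hn He Hu eps e0.
have e40 : 0 < eps / 4 by rewrite divr_gt0.
have [N0 _ HN0] := cvgr_dist_lt _ _ Hu _ e40.
pose g i := if (0 < i)%N && (eps / 2 <= `|u i - e|) then 2 - `|u i + e| else 1.
have gpos : forall i, (i < N0)%N -> 0 < g i.
  move=> i _; rewrite /g; case: ifP => // /andP[i0 hi].
  rewrite subr_gt0; apply: SC; rewrite ?Hn //.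
  move=> E; move: hi; rewrite E subrr normr0; lra.
have [d1 [d10 Hd1]] := @fin_min1 R g N0 gpos.
have m0 : 0 < Num.min (eps / 4) (d1 / 2) by rewrite lt_min e40 divr_gt0.
have [N1 _ HN1] := cvgr_dist_lt _ _ Hu _ m0.
pose M := maxn N0 N1.
pose f i j := if [&& (0 < i)%N, (0 < j)%N & eps <= `|u i - u j|]
              then 2 - `|u i + u j| else 1.
have fpos : forall i j, (i < M)%N -> (j < M)%N -> 0 < f i j.
  move=> i j _ _; rewrite /f; case: ifP => // /and3P[i0 j0 hij].
  rewrite subr_gt0; apply: SC; rewrite ?Hn //.
  move=> E; move: hij; rewrite E subrr normr0; lra.
have [d2 [d20 Hd2]] := @fin_min2 R f M fpos.
have claim : forall i j, (0 < i)%N -> (0 < j)%N -> eps <= `|u i - u j| ->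
    (M <= j)%N -> `|u i + u j| <= 2 - d1 / 2.
  move=> i j i0 j0 hij Mj.
  have hj : `|e - u j| < Num.min (eps / 4) (d1 / 2).
    by apply: HN1; rewrite /= (leq_trans _ Mj) // leq_maxr.
  move: hj; rewrite lt_min => /andP[hj1 hj2].
  have iN0 : (i < N0)%N.
    rewrite ltnNge; apply/negP => Ni.
    have hi : `|e - u i| < eps / 4 by apply: HN0.
    have := ler_distD e (u i) (u j); rewrite distrC in hi.
    lra.
  have hie : eps / 2 <= `|u i - e|.
    have := ler_distD e (u i) (u j); lra.
  have := Hd1 _ iN0; rewrite /g i0 hie /= => hg.
  have E : u i + u j = (u i + e) + (u j - e) by rewrite addrACA subrr addr0.
  have := ler_normD (u i + e) (u j - e); rewrite -E distrC.
  lra.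
exists (Num.min (Num.min (d1 / 2) d2) (1 / 2)); split.
  rewrite !lt_min divr_gt0 //= d20 /= ?ltr01 ?divr_gt0 //=.
  by rewrite gt_min orbC ltr_pdivrMr ?mul1r ?ltr1n.
move=> i j i0 j0 hij.
have [Mi|iM] := leqP M i.
  have := claim j i j0 i0; rewrite distrC [u j + _]addrC => /(_ hij Mi) h.
  rewrite (le_trans h) // lerD2l lerN2 !ge_min lexx //.
have [Mj|jM] := leqP M j.
  rewrite (le_trans (claim i j i0 j0 hij Mj)) // lerD2l lerN2 !ge_min lexx //.
have := Hd2 _ _ iM jM; rewrite /f i0 j0 hij /= => h.
have : Num.min (Num.min (d1 / 2) d2) (1 / 2) <= d2 by rewrite !ge_min lexx orbT.
lra.
Qed.

(* Sequence indexed by N = {1,2,...}; v 0 is ignored. *)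
Theorem mainTheorem9 (R : realType) (X : completeNormedModType R)
  (v : nat -> X) :
  strictly_convex_space X ->
  (forall n m : nat, (0 < n)%N -> (0 < m)%N -> `|v (n + m)%N| <= `|v n + v m|) ->
  (exists L : R, 0 < L /\ (fun n : nat => `|v n| / n%:R) @ \oo --> L) ->
  (cvg ((fun n : nat => (n%:R)^-1 *: v n) @ \oo) <->
   uniformly_convex_set [set (`|v n|)^-1 *: v n | n in [set n : nat | (0 < n)%N]]).
Proof.
move=> SC Hsub [L [L0 Hlim]].
have Hs : forall n m, (0 < n)%N -> (0 < m)%N -> `|v (n + m)%N| <= `|v n| + `|v m|.
  by move=> n m n0 m0; rewrite (le_trans (Hsub _ _ n0 m0)) // ler_normD.
have Hlb := @fekete_lb R (fun n => `|v n|) L Hs Hlim.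
have Hp := @a_gt0 R X v L L0 Hlb.
have Hn := @u_norm R X v L L0 Hlb.
split.
- move=> Hc.
  have Hw : (fun n : nat => (n%:R)^-1 *: v n) @ \oo --> lim ((fun n : nat => (n%:R)^-1 *: v n) @ \oo) := Hc.
  set w := lim _ in Hw.
  have Hu' : (fun n => (`|v n| / n%:R)^-1 *: ((n%:R)^-1 *: v n)) @ \oo --> L^-1 *: w.
    apply: cvgZ => //; apply: cvgV => //; by rewrite gt_eqF.
  have Hu : (fun n => `|v n|^-1 *: v n) @ \oo --> L^-1 *: w.
    apply: cvg_trans Hu'; apply: near_eq_cvg; exists 1%N => // n /= n1.
    rewrite scalerA invfM invrK mulfK // pnatr_eq0 -lt0n //.
  have He : `|L^-1 *: w| = 1.
    have h1 : (fun n => `| `|v n|^-1 *: v n|) @ \oo --> `|L^-1 *: w| by apply: cvg_norm.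
    have h2 : (fun n => `| `|v n|^-1 *: v n|) @ \oo --> (1 : R).
      have hc : (fun _ : nat => (1:R)) @ \oo --> (1:R) by apply: cvg_cst.
      apply: cvg_trans hc; apply: near_eq_cvg; exists 1%N => // n /= n1.
      by rewrite Hn.
    by rewrite -(norm_cvg_lim h1) (norm_cvg_lim h2).
  move=> eps e0.
  have [d [dr H]] := @fwd R X _ _ SC Hn He Hu eps e0.
  exists d; split => // x y [i i0 <-] [j j0 <-] _ _ hxy.
  exact: H.
- move=> UC.
  apply: (@back_cvg R X v L (lim ((fun n => `|v n|^-1 *: v n) @ \oo)) Hlim _ Hp).
  apply: cauchy_seq_cvg.
  apply: (@u_cauchy R X v L L0 Hsub Hlb Hlim).
  move=> eps e0; have [d [/andP[d0 _] H]] := UC eps e0.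
  exists d; split => // i j i0 j0 h; apply: H => //.
  + by exists i.
  + by exists j.
  + exact: Hn.
  + exact: Hn.
Qed.
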